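(* Let $\mathbb{F}$ be a field of characteristic $>3$. Then $\mathfrak{sl}_2(\mathbb{F})$ has a COD, and this COD is unique up to conjugacy, if and only if $\mathbb{F}$ contains a primitive fourth root of unity.
   Context: $\mathfrak{sl}_n(\mathbb{F})$ denotes the Lie algebra of $n\times n$ traceless matrices over $\mathbb{F}$. A Cartan subalgebra is a nilpotent self-normalizing subalgebra. A classical Cartan subalgebra of $\mathfrak{L}=\mathfrak{sl}_n(\mathbb{F})$ (with $\ell=\mathrm{char}\,\mathbb{F}$) is an abelian Cartan subalgebra $H$ such that: (a) $\mathfrak{L}=\bigoplus_\alpha \mathfrak{L}_\alpha$ with $\mathfrak{L}_\alpha=\{x: [x,h]=\alpha(h)x\ \forall h\in H\}$ over linear functionals $\alpha$ on $H$ (roots); (b) for each root $\alpha\ne0$, $[\mathfrak{L}_\alpha,\mathfrak{L}_{-\alpha}]$ is one-dimensional; (c) for roots $\alpha,\beta$ with $\beta\neq0$, not all $\alpha+k\beta$ ($1\le k\le \ell-1$) are roots. The Killing form is $K(A,B)=2n\,\mathrm{Tr}(AB)$. A COD of $\mathfrak{sl}_n(\mathbb{F})$ is a vector space decomposition $\mathfrak{sl}_n(\mathbb{F})=H_0\oplus\cdots\oplus H_n$ into classical Cartan subalgebras that are pairwise orthogonal with respect to $K$. Two CODs are conjugate if there is a Lie algebra automorphism of $\mathfrak{sl}_n(\mathbb{F})$ mapping each component of the first decomposition onto exactly one component of the second. *)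

(* Defs.v *)
From HB Require Import structures.
From mathcomp Require Import all_boot all_order all_algebra.
Set Implicit Arguments. Unset Strict Implicit. Unset Printing Implicit Defensive.
Import Order.TTheory GRing.Theory Num.Theory.
Local Open Scope ring_scope.

Section LieDefs.
Variables (F : fieldType) (n : nat).
Local Notation M := 'M[F]_n.

Definition lie (x y : M) : M := x *m y - y *m x.

Definition in_sl (x : M) : Prop := \tr x = 0.

Definition killing (x y : M) : F := (2 * n)%:R * \tr (x *m y).

Definition inspan (P : M -> Prop) (w : M) : Prop :=
  exists (k : nat) (c : 'I_k -> F) (v : 'I_k -> M),
    (forall i, P (v i)) /\ w = \sum_(i < k) c i *: v i.

Definition one_dim (P : M -> Prop) : Prop :=
  exists z : M, z != 0 /\ forall w, inspan P w <-> exists c : F, w = c *: z.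

Definition subalg (H : {vspace M}) : Prop :=
  (forall x, x \in H -> in_sl x) /\
  (forall x y, x \in H -> y \in H -> lie x y \in H).

Definition lie_abelian (H : {vspace M}) : Prop :=
  forall x y, x \in H -> y \in H -> lie x y = 0.

(* nilpotent: the lower central series reaches 0, i.e. all iterated
   brackets [x_1,[x_2,...,[x_k,y]...]] of length k vanish *)
Definition lie_nilpotent (H : {vspace M}) : Prop :=
  exists k : nat, forall (xs : seq M) (y : M), size xs = k ->
    (forall x, x \in xs -> x \in H) -> y \in H -> foldr lie y xs = 0.

Definition self_normalizing (H : {vspace M}) : Prop :=
  forall x, in_sl x -> (forall h, h \in H -> lie x h \in H) -> x \in H.

Definition cartan (H : {vspace M}) : Prop :=
  subalg H /\ lie_nilpotent H /\ self_normalizing H.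

(* linear functionals on H, represented by functions M -> F that are linear
   on H; two such are identified when they agree on H *)
Definition lin_on (H : {vspace M}) (a : M -> F) : Prop :=
  forall (c : F) x y, x \in H -> y \in H -> a (c *: x + y) = c * a x + a y.

Definition eq_on (H : {vspace M}) (a b : M -> F) : Prop :=
  forall h, h \in H -> a h = b h.

Definition wspace (H : {vspace M}) (a : M -> F) (x : M) : Prop :=
  in_sl x /\ forall h, h \in H -> lie x h = a h *: x.

Definition root (H : {vspace M}) (a : M -> F) : Prop :=
  lin_on H a /\ exists x, x != 0 /\ wspace H a x.

(* (a): L = (+)_a L_a, direct sum over all linear functionals a on H *)
Definition root_decomp (H : {vspace M}) : Prop :=
  (forall x, in_sl x -> exists (k : nat) (al : 'I_k -> M -> F) (xs : 'I_k -> M),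
      (forall i, lin_on H (al i) /\ wspace H (al i) (xs i)) /\
      x = \sum_(i < k) xs i) /\
  (forall (k : nat) (al : 'I_k -> M -> F) (xs : 'I_k -> M),
      (forall i, lin_on H (al i)) ->
      (forall i j, i != j -> ~ eq_on H (al i) (al j)) ->
      (forall i, wspace H (al i) (xs i)) ->
      \sum_(i < k) xs i = 0 -> forall i, xs i = 0).

Definition cond_b (H : {vspace M}) : Prop :=
  forall a, root H a -> ~ eq_on H a (fun _ => 0) ->
    one_dim (fun w => exists x y, wspace H a x /\
                                  wspace H (fun h => - a h) y /\ w = lie x y).

Definition cond_c (l : nat) (H : {vspace M}) : Prop :=
  forall a b, root H a -> root H b -> ~ eq_on H b (fun _ => 0) ->
    ~ (forall k : nat, (1 <= k <= l - 1)%N -> root H (fun h => a h + k%:R * b h)).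

(* classical Cartan subalgebra, l = char F *)
Definition classical_cartan (l : nat) (H : {vspace M}) : Prop :=
  cartan H /\ lie_abelian H /\ root_decomp H /\ cond_b H /\ cond_c l H.

Definition COD (l : nat) (Hs : 'I_n.+1 -> {vspace M}) : Prop :=
  (forall i, classical_cartan l (Hs i)) /\
  (forall i j, i != j -> forall x y, x \in Hs i -> y \in Hs j -> killing x y = 0) /\
  (forall x, in_sl x <-> x \in (\sum_(i < n.+1) Hs i)%VS) /\
  directv (\sum_(i < n.+1) Hs i).

Definition lie_aut (phi : M -> M) : Prop :=
  (forall (c : F) x y, in_sl x -> in_sl y -> phi (c *: x + y) = c *: phi x + phi y) /\
  (forall x, in_sl x -> in_sl (phi x)) /\
  (forall x y, in_sl x -> in_sl y -> phi x = phi y -> x = y) /\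
  (forall y, in_sl y -> exists x, in_sl x /\ phi x = y) /\
  (forall x y, in_sl x -> in_sl y -> phi (lie x y) = lie (phi x) (phi y)).

Definition COD_conjugate (Hs Ks : 'I_n.+1 -> {vspace M}) : Prop :=
  exists phi, lie_aut phi /\
    exists f : 'I_n.+1 -> 'I_n.+1, forall i y,
      y \in Ks (f i) <-> exists x, x \in Hs i /\ phi x = y.

End LieDefs.

(* Main.v *)
Require Import Defs.
From HB Require Import structures.
From mathcomp Require Import all_boot all_order all_algebra.
From mathcomp Require Import ring zify.
Set Implicit Arguments. Unset Strict Implicit. Unset Printing Implicit Defensive.
Import GRing.Theory.
Local Open Scope ring_scope.

Section Basic.
Variable F : fieldType.
Local Notation M := 'M[F]_2.

Lemma ord2P (i : 'I_2) : i = 0 \/ i = 1.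
Proof. by case: i => [[|[|//]]] Hi; [left|right]; apply/val_inj. Qed.

Lemma mx2_eq (A B : M) : A 0 0 = B 0 0 -> A 0 1 = B 0 1 -> A 1 0 = B 1 0 -> A 1 1 = B 1 1 -> A = B.
Proof.
move=> h1 h2 h3 h4; apply/matrixP => i j.
by case: (ord2P i) => ->; case: (ord2P j) => ->.
Qed.

Lemma sum2 (f : 'I_2 -> F) : \sum_(i < 2) f i = f 0 + f 1.
Proof.
rewrite !big_ord_recr big_ord0 /= add0r.
by congr (f _ + f _); apply: val_inj.
Qed.

Lemma tr2 (A : M) : \tr A = A 0 0 + A 1 1.
Proof. by rewrite /mxtrace sum2. Qed.

Lemma polar (x y : M) : \tr x = 0 -> \tr y = 0 -> x * y + y * x = \tr (x * y) *: 1.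
Proof.
rewrite !tr2 => hx hy.
have ex : x 1 1 = - x 0 0 by apply/eqP; rewrite -addr_eq0 addrC hx.
have ey : y 1 1 = - y 0 0 by apply/eqP; rewrite -addr_eq0 addrC hy.
apply: mx2_eq; rewrite !mxE !sum2 /= ex ey; ring.
Qed.

Lemma tr1 : \tr (1 : M) = 2.
Proof. by rewrite tr2 !mxE. Qed.

Lemma trC (x y : M) : \tr (x * y) = \tr (y * x).
Proof. by rewrite -!mulmxE mxtrace_mulC. Qed.

Lemma lieE (x y : M) : lie x y = x * y - y * x.
Proof. by rewrite /lie mulmxE. Qed.

Lemma trZ1 (c : F) : \tr (c *: (1 : M)) = c * 2.
Proof. by rewrite mxtraceZ tr1. Qed.

Definition E01 : M := delta_mx 0 1.
Definition E10 : M := delta_mx 1 0.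

Lemma trE01 : \tr E01 = 0.
Proof. by rewrite tr2 !mxE /= addr0. Qed.
Lemma trE10 : \tr E10 = 0.
Proof. by rewrite tr2 !mxE /= addr0. Qed.

Lemma central2 (w : M) : w * E01 = E01 * w -> w * E10 = E10 * w -> w = w 0 0 *: 1.
Proof.
move=> h1 h2.
have a1 := congr1 (fun A : M => A 1 1) h1.
have a2 := congr1 (fun A : M => A 0 1) h1.
have a3 := congr1 (fun A : M => A 0 0) h2.
move: a1 a2 a3; rewrite !mxE !sum2 /= !mxE /=.
rewrite !(mul0r,mulr0,mulr1,mul1r,add0r,addr0) => a1 a2 a3.
apply: mx2_eq; rewrite !mxE /= ?mulr1 ?mulr0 //.
Qed.

Lemma E01_neq0 : E01 != 0.
Proof. apply/eqP => /matrixP /(_ 0 1); rewrite !mxE /=; apply/eqP; exact: oner_neq0. Qed.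

End Basic.

Section Alg.
Variable F : fieldType.
Hypothesis h2 : (2 : F) != 0.
Local Notation M := 'M[F]_2.

Lemma weight (x y : M) (d mu : F) : x * x = d *: 1 -> y * x - x * y = mu *: y -> mu != 0 ->
  [/\ x * y = - (mu / 2) *: y, y * x = (mu / 2) *: y & (mu / 2) ^+ 2 *: y = d *: y].
Proof.
move=> hx hyx hmu.
have e1 : y * x = x * y + mu *: y by rewrite -hyx addrC subrK.
have e2 : y * (x * x) = (x * x) * y + ((mu *: (x * y) + mu *: (x * y)) + (mu * mu) *: y).
  rewrite mulrA e1 mulrDl -mulrA e1 mulrDr !mulrA -!scalerAl -!scalerAr e1 scalerDr scalerA.
  by rewrite !addrA.
have e3 : (mu *: (x * y) + mu *: (x * y)) + (mu * mu) *: y = 0.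
  move: e2; rewrite hx -scalerAl -scalerAr mul1r mulr1 => /eqP.
  by rewrite -subr_eq0 opprD addrA subrr add0r oppr_eq0 => /eqP.
have hxy : x * y = - (mu / 2) *: y.
  have : (mu + mu) *: (x * y) = - (mu * mu) *: y.
    by rewrite scalerDl scaleNr; apply/eqP; rewrite -subr_eq0 opprK e3.
  move=> /(congr1 (fun v => (mu + mu)^-1 *: v)); rewrite !scalerA mulVf; last first.
    by rewrite -mulr2n -mulr_natr mulf_neq0.
  rewrite scale1r => ->; congr (_ *: _); field.
  by rewrite h2 /= -mulr2n -mulr_natr mulf_neq0.
split => //.
  by rewrite e1 hxy -scalerDl; congr (_ *: _); field.
have : (x * x) * y = (mu / 2) ^+ 2 *: y.
  by rewrite -mulrA hxy -scalerAr hxy scalerA; congr (_ *: _); field.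
by rewrite hx -scalerAl mul1r.
Qed.

Lemma in_line (x u : M) (c : F) : \tr x = 0 -> \tr u = 0 -> u * u = 1 ->
  x * u - u * x = c *: u -> x = (\tr (x * u) / 2) *: u.
Proof.
move=> tx tu hu hc.
have hp := polar tx tu.
have e1 : x * u + x * u = c *: u + \tr (x * u) *: 1.
  by rewrite -hc -hp addrACA addNr addr0.
have e2 : x + x = c *: 1 + \tr (x * u) *: u.
  have := congr1 (fun v => v * u) e1.
  by rewrite /= !mulrDl -!mulrA hu !mulr1 -!scalerAl hu mul1r.
have hc0 : c = 0.
  have := congr1 (@mxtrace _ _) e2.
  rewrite !mxtraceD !mxtraceZ tu tr1 mulr0 addr0 => /eqP.
  rewrite -mulr2n -mulr_natr eq_sym => /eqP; rewrite tx => /eqP.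
  by rewrite mul1r mul0rn mulf_eq0 (negbTE h2) orbF => /eqP.
rewrite {1}(_ : x = 2^-1 *: (x + x)); last by rewrite -mulr2n -scaler_nat scalerA mulVf // scale1r.
by rewrite e2 hc0 scale0r add0r scalerA mulrC.
Qed.

End Alg.

Section Perm.
Variable V : zmodType.
Implicit Types x : V.
Lemma add4 x1 x2 x3 x4 y1 y2 y3 y4 :
  (x1 + x2 + x3 + x4) + (y1 + y2 + y3 + y4) = (x1 + y1) + (x2 + y2) + (x3 + y3) + (x4 + y4).
Proof. by rewrite addrACA [x1 + x2 + x3 + _]addrACA [x1 + x2 + _]addrACA. Qed.
Lemma perm2143 x1 x2 x3 x4 : x1 + x2 + x3 + x4 = x2 + x1 + x4 + x3.
Proof. by rewrite (addrC x1) addrAC. Qed.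
Lemma perm3412 x1 x2 x3 x4 : x1 + x2 + x3 + x4 = x3 + x4 + x1 + x2.
Proof. by rewrite -addrA addrC addrA. Qed.
Lemma perm4321 x1 x2 x3 x4 : x1 + x2 + x3 + x4 = x4 + x3 + x2 + x1.
Proof. by rewrite -addrA addrC (addrC x3) (addrC x1) addrA. Qed.
End Perm.

Section Pauli.
Variable F : fieldType.
Hypothesis h2 : (2 : F) != 0.
Local Notation M := 'M[F]_2.
Variables a b : M.
Hypotheses (ha : a * a = 1) (hb : b * b = 1) (hba : b * a = - (a * b))
  (ta : \tr a = 0) (tb : \tr b = 0).

Definition L (p q r s : F) : M := p *: 1 + q *: a + r *: b + s *: (a * b).

Lemma Leq p q r s p' q' r' s' : p = p' -> q = q' -> r = r' -> s = s' ->
  L p q r s = L p' q' r' s'.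
Proof. by move=> -> -> -> ->. Qed.

Lemma Ladd p q r s p' q' r' s' :
  L p q r s + L p' q' r' s' = L (p + p') (q + q') (r + r') (s + s').
Proof. by rewrite /L add4 !scalerDl. Qed.

Lemma Lscale c p q r s : c *: L p q r s = L (c * p) (c * q) (c * r) (c * s).
Proof. by rewrite /L !scalerDr !scalerA. Qed.

Lemma Lopp p q r s : - L p q r s = L (- p) (- q) (- r) (- s).
Proof. by rewrite -scaleN1r Lscale; apply: Leq; ring. Qed.

Lemma Lsub p q r s p' q' r' s' :
  L p q r s - L p' q' r' s' = L (p - p') (q - q') (r - r') (s - s').
Proof. by rewrite Lopp Ladd. Qed.

Lemma L0 : L 0 0 0 0 = 0.
Proof. by rewrite /L !scale0r !addr0. Qed.

Lemma aba : a * b * a = - b.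
Proof. by rewrite -mulrA hba mulrN mulrA ha mul1r. Qed.
Lemma bab : b * (a * b) = - a.
Proof. by rewrite mulrA hba mulNr -mulrA hb mulr1. Qed.
Lemma abab : a * b * (a * b) = - 1.
Proof. by rewrite mulrA aba mulNr hb. Qed.

Lemma La p q r s : a * L p q r s = L q p s r.
Proof.
rewrite /L !mulrDr -!scalerAr mulr1 ha mulrA ha mul1r.
by rewrite perm2143.
Qed.

Lemma Lb p q r s : b * L p q r s = L r (- s) p (- q).
Proof.
rewrite /L !mulrDr -!scalerAr mulr1 hb hba bab !scalerN -!scaleNr.
by rewrite perm3412.
Qed.

Lemma Lab p q r s : (a * b) * L p q r s = L (- s) r (- q) p.
Proof.
rewrite /L !mulrDr -!scalerAr mulr1 aba abab -mulrA hb mulr1 !scalerN -!scaleNr.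
by rewrite perm4321.
Qed.

Lemma Lmul p q r s p' q' r' s' :
  L p q r s * L p' q' r' s' =
  L (p * p' + q * q' + r * r' - s * s') (p * q' + q * p' - r * s' + s * r')
    (p * r' + r * p' + q * s' - s * q') (p * s' + s * p' + q * r' - r * q').
Proof.
rewrite {1}/L !mulrDl -!scalerAl mul1r La Lb Lab !Lscale !Ladd.
by apply: Leq; ring.
Qed.

Lemma trab : \tr (a * b) = 0.
Proof.
have : \tr (a * b) + \tr (a * b) = 0.
  by rewrite {2}trC hba linearN subrr.
by rewrite -mulr2n -mulr_natr => /eqP; rewrite mulf_eq0 (negbTE h2) orbF => /eqP.
Qed.

Lemma Ltr p q r s : \tr (L p q r s) = p * 2.
Proof. by rewrite /L !mxtraceD !mxtraceZ tr1 ta tb trab !mulr0 !addr0. Qed.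

Lemma La1 : a = L 0 1 0 0.
Proof. by rewrite /L !scale0r scale1r add0r !addr0. Qed.
Lemma Lb1 : b = L 0 0 1 0.
Proof. by rewrite /L !scale0r scale1r !add0r !addr0. Qed.
Lemma Lab1 : a * b = L 0 0 0 1.
Proof. by rewrite /L !scale0r scale1r !add0r. Qed.
Lemma L11 : 1 = L 1 0 0 0.
Proof. by rewrite /L !scale0r scale1r !addr0. Qed.

Definition cp (m : M) := \tr m / 2.
Definition cq (m : M) := \tr (m * a) / 2.
Definition cr (m : M) := \tr (m * b) / 2.
Definition cs (m : M) := - \tr (m * (a * b)) / 2.

Lemma cpL p q r s : cp (L p q r s) = p.
Proof. by rewrite /cp Ltr mulfK. Qed.
Lemma cqL p q r s : cq (L p q r s) = q.
Proof. by rewrite /cq [X in L _ _ _ _ * X]La1 Lmul Ltr; field. Qed.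
Lemma crL p q r s : cr (L p q r s) = r.
Proof. by rewrite /cr [X in L _ _ _ _ * X]Lb1 Lmul Ltr; field. Qed.
Lemma csL p q r s : cs (L p q r s) = s.
Proof. by rewrite /cs [X in L _ _ _ _ * X]Lab1 Lmul Ltr; field. Qed.

Lemma Llie p q r s p' q' r' s' :
  lie (L p q r s) (L p' q' r' s') =
  L 0 ((s * r' - r * s') * 2) ((q * s' - s * q') * 2) ((q * r' - r * q') * 2).
Proof. by rewrite lieE !Lmul Lsub; apply: Leq; ring. Qed.

End Pauli.

Section LieLin.
Variable F : fieldType.
Local Notation M := 'M[F]_2.
Lemma lieZl (c : F) (x y : M) : lie (c *: x) y = c *: lie x y.
Proof. by rewrite !lieE scalerBr -scalerAl -scalerAr. Qed.
Lemma lieZr (c : F) (x y : M) : lie x (c *: y) = c *: lie x y.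
Proof. by rewrite !lieE scalerBr -scalerAl -scalerAr. Qed.
Lemma lie0l (y : M) : lie 0 y = 0.
Proof. by rewrite lieE mul0r mulr0 subrr. Qed.
Lemma lie_suml (k : nat) (f : 'I_k -> M) (y : M) : lie (\sum_(i < k) f i) y = \sum_(i < k) lie (f i) y.
Proof.
rewrite lieE mulr_suml mulr_sumr -sumrB.
by apply: eq_bigr => i _; rewrite lieE.
Qed.
Lemma tr_lie (x y : M) : \tr (lie x y) = 0.
Proof. by rewrite lieE linearB /= trC subrr. Qed.
End LieLin.

Section Line.
Variable F : fieldType.
Hypothesis h2 : (2 : F) != 0.
Local Notation M := 'M[F]_2.
Variables a b : M.
Hypotheses (ha : a * a = 1) (hb : b * b = 1) (hba : b * a = - (a * b))
  (ta : \tr a = 0) (tb : \tr b = 0).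
Local Notation L := (L a b).
Local Notation H := (<[a]>%VS : {vspace M}).

Lemma La1' : a = L 0 1 0 0.
Proof. exact: La1. Qed.

Lemma memH h : h \in H -> exists c, h = c *: a.
Proof. by move/vlineP. Qed.

Lemma aH : a \in H.
Proof. exact: memv_line. Qed.

Lemma lin_on0 (al : M -> F) : lin_on H al -> al 0 = 0.
Proof.
move=> hl; have := hl 1 0 0 (mem0v _) (mem0v _).
rewrite scaler0 addr0 mul1r => e.
by apply: (addrI (al 0)); rewrite addr0 -e.
Qed.

Lemma lin_onZ (al : M -> F) c : lin_on H al -> al (c *: a) = c * al a.
Proof.
move=> hl; have := hl c a 0 aH (mem0v _).
by rewrite addr0 (lin_on0 hl) addr0.
Qed.

Lemma lie_line (c c' : F) : lie (c *: a) (c' *: a) = 0.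
Proof. by rewrite lieZl lieZr lieE subrr !scaler0. Qed.

Lemma wsp_intro (al : M -> F) y : lin_on H al -> \tr y = 0 ->
  lie y a = al a *: y -> wspace H al y.
Proof.
move=> hl ty hy; split => // h /memH [c ->].
by rewrite lieZr hy scalerA (lin_onZ _ hl).
Qed.

Lemma wsp_a (al : M -> F) y : wspace H al y -> y * a - a * y = al a *: y.
Proof. by case=> _ /(_ a aH); rewrite lieE. Qed.

Lemma wspZ (al : M -> F) y c : wspace H al y -> wspace H al (c *: y).
Proof.
case=> ty hy; split; first by rewrite /in_sl mxtraceZ ty mulr0.
by move=> h hh; rewrite lieZl hy // !scalerA mulrC.
Qed.

Lemma root_val (al : M -> F) : Defs.root H al -> al a ^+ 3 = 4 * al a.
Proof.
case=> hl [x [xn0 hx]].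
have hxa := wsp_a hx.
have [mu0|mun0] := eqVneq (al a) 0.
  by rewrite mu0 expr0n mulr0.
have [_ _ e] := weight h2 (x := a) (d := 1) (etrans ha (esym (scale1r 1))) hxa mun0.
have : ((al a / 2) ^+ 2 - 1) *: x = 0 by rewrite scalerBl e scale1r subrr.
move/eqP; rewrite scaler_eq0 (negbTE xn0) orbF subr_eq0 => /eqP e2.
have -> : al a ^+ 3 = al a * (al a / 2) ^+ 2 * 4 by field.
by rewrite e2 mulr1 mulrC.
Qed.


Lemma eq_onH (al be : M -> F) : lin_on H al -> lin_on H be -> al a = be a -> eq_on H al be.
Proof.
by move=> hl hb' e h /memH [c ->]; rewrite (lin_onZ _ hl) (lin_onZ _ hb') e.
Qed.

Lemma indep (k : nat) (al : 'I_k -> M -> F) (xs : 'I_k -> M) :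
  (forall i, lin_on H (al i)) ->
  (forall i j, i != j -> ~ eq_on H (al i) (al j)) ->
  (forall i, wspace H (al i) (xs i)) ->
  \sum_(i < k) xs i = 0 -> forall i, xs i = 0.
Proof.
move=> hl hd hw hs i0.
pose lam i := al i a.
have Tx i : lie (xs i) a = lam i *: xs i by rewrite lieE (wsp_a (hw i)).
have S1 : \sum_(i < k) lam i *: xs i = 0.
  rewrite (eq_bigr (fun i => lie (xs i) a)); last by move=> i _; rewrite Tx.
  by rewrite -lie_suml hs lie0l.
have S2 : \sum_(i < k) lam i ^+ 2 *: xs i = 0.
  transitivity (lie (\sum_(i < k) lam i *: xs i) a); last by rewrite S1 lie0l.
  rewrite lie_suml; apply: eq_bigr => i _.
  by rewrite lieZl Tx scalerA expr2.
apply/eqP; apply: contraT => hnz.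
have r0 : lam i0 ^+ 3 = 4 * lam i0 by apply: (root_val (al := al i0)); split; [exact: hl | exists (xs i0)].
pose q t := t ^+ 2 + lam i0 * t + (lam i0 ^+ 2 - 4).
have Sq : \sum_(i < k) q (lam i) *: xs i = 0.
  rewrite (eq_bigr (fun i => lam i ^+ 2 *: xs i + lam i0 *: (lam i *: xs i) + (lam i0 ^+ 2 - 4) *: xs i)); last first.
    by move=> i _; rewrite /q !scalerDl scalerA.
  by rewrite !big_split /= -!scaler_sumr S1 S2 hs !scaler0 !addr0.
have oth i : i != i0 -> q (lam i) *: xs i = 0.
  move=> ne; have [->|xn] := eqVneq (xs i) 0; first by rewrite scaler0.
  have ri : lam i ^+ 3 = 4 * lam i by apply: (root_val (al := al i)); split; [exact: hl | exists (xs i)].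
  have ln : lam i - lam i0 != 0.
    rewrite subr_eq0; apply/eqP => e; apply: (hd _ _ ne).
    exact: eq_onH.
  have : (lam i - lam i0) * q (lam i) = 0.
    have -> : (lam i - lam i0) * q (lam i) = (lam i ^+ 3 - 4 * lam i) - (lam i0 ^+ 3 - 4 * lam i0).
      by rewrite /q; ring.
    by rewrite ri r0 !subrr.
  by move/eqP; rewrite mulf_eq0 (negbTE ln) /= => /eqP ->; rewrite scale0r.
move: Sq; rewrite (bigD1 i0) //= big1 ?addr0; last by move=> i; apply: oth.
move/eqP; rewrite scaler_eq0 (negbTE hnz) orbF.
have -> : q (lam i0) = 3 * lam i0 ^+ 2 - 4 by rewrite /q; ring.
have h4 : (4 : F) != 0.
  have -> : (4 : F) = 2 * 2 by ring.
  by rewrite mulf_neq0.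
have [l0|ln0] := eqVneq (lam i0) 0.
  by rewrite l0 expr0n mulr0 sub0r oppr_eq0 (negbTE h4).
have l2 : lam i0 ^+ 2 = 4.
  apply: (mulfI ln0); rewrite -exprS r0 mulrC.
  by [].
rewrite l2; have -> : (3 * 4 - 4 : F) = 2 * 4 by ring.
by rewrite mulf_eq0 (negbTE h2) (negbTE h4).
Qed.

Hypothesis hspan : forall m : M, exists p q r s, m = L p q r s.

Lemma lin_tr : lin_on H (fun h => \tr (h * a)).
Proof. by move=> c x y _ _; rewrite mulrDl -scalerAl mxtraceD mxtraceZ. Qed.
Lemma lin_ntr : lin_on H (fun h => - \tr (h * a)).
Proof. by move=> c x y _ _; rewrite mulrDl -scalerAl mxtraceD mxtraceZ opprD mulrN. Qed.
Lemma lin_zero : lin_on H (fun _ => 0).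
Proof. by move=> c x y _ _; rewrite mulr0 addr0. Qed.

Lemma Ltr0 (x : M) : \tr x = 0 -> exists q r s, x = L 0 q r s.
Proof.
move=> tx; have [p [q [r [s ex]]]] := hspan x.
exists q, r, s; rewrite ex; congr L.
move: tx; rewrite ex (Ltr h2 hba ta tb) => /eqP.
by rewrite mulf_eq0 (negbTE h2) orbF => /eqP.
Qed.

Lemma lieLa q r s : lie (L 0 q r s) a = L 0 0 (- (s * 2)) (- (r * 2)).
Proof. by rewrite [X in lie _ X](La1 a b) (Llie ha hb hba); apply: Leq; ring. Qed.

Lemma decomp : forall x, in_sl x -> exists (k : nat) (al : 'I_k -> M -> F) (xs : 'I_k -> M),
      (forall i, lin_on H (al i) /\ wspace H (al i) (xs i)) /\
      x = \sum_(i < k) xs i.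
Proof.
move=> x /Ltr0 [q [r [s ->]]].
exists 3%N.
exists (fun i => nth (fun _ => 0) [:: (fun _ => 0); (fun h => \tr (h * a)); (fun h => - \tr (h * a))] i).
exists (fun i => nth 0 [:: L 0 q 0 0; L 0 0 ((r - s) / 2) ((s - r) / 2); L 0 0 ((r + s) / 2) ((r + s) / 2)] i).
split.
  case=> [[|[|[|//]]]] hi /=.
  - split; first exact: lin_zero.
    apply: wsp_intro => //; first exact: lin_zero.
      by rewrite (Ltr h2 hba ta tb) mul0r.
    by rewrite lieLa scale0r; rewrite -(L0 a b); apply: Leq; ring.
  - split; first exact: lin_tr.
    apply: wsp_intro => //; first exact: lin_tr.
      by rewrite (Ltr h2 hba ta tb) mul0r.
    by rewrite lieLa ha tr1 (Lscale a b); apply: Leq; field.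
  - split; first exact: lin_ntr.
    apply: wsp_intro => //; first exact: lin_ntr.
      by rewrite (Ltr h2 hba ta tb) mul0r.
    by rewrite lieLa ha tr1 (Lscale a b); apply: Leq; field.
rewrite !big_ord_recl big_ord0 /= addr0 !(Ladd a b).
by apply: Leq; field.
Qed.

Lemma n4 : (4 : F) != 0.
Proof. have -> : (4 : F) = 2 * 2 by ring. by rewrite mulf_neq0. Qed.

Lemma lin_neg (al : M -> F) : lin_on H al -> lin_on H (fun h => - al h).
Proof. by move=> hl c x y hx hy; rewrite hl // opprD mulrN. Qed.

Lemma a_neq0 : a != 0.
Proof. by apply/eqP => a0; move: ha; rewrite a0 mul0r => /eqP; rewrite eq_sym oner_eq0. Qed.

Lemma root_ne0 (al : M -> F) : lin_on H al -> ~ eq_on H al (fun _ => 0) -> al a != 0.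
Proof.
move=> hl hne; apply/eqP => m0; apply: hne; apply: eq_onH => //.
exact: lin_zero.
Qed.

Lemma condb : cond_b H.
Proof.
move=> al hr hne; have hl := hr.1.
pose mu := al a.
have mun0 : mu != 0 by exact: (root_ne0 hl hne).
have r3 : mu ^+ 3 = 4 * mu := root_val hr.
pose s := mu / 2.
have emu : mu = s * 2 by rewrite /s mulfVK.
have hs : s * s = 1.
  apply: (mulfI mun0); rewrite mulr1.
  have : mu * (s * s) * 4 = mu ^+ 3 by rewrite emu; ring.
  rewrite r3 => e; apply: (mulIf n4); by rewrite e mulrC.
have hA : forall w, (exists x y, wspace H al x /\ wspace H (fun h => - al h) y /\ w = lie x y) ->
    w = (\tr (w * a) / 2) *: a.
  move=> w [x [y [hx [hy ->]]]].
  apply: (in_line h2 (c := 0)) => //; first exact: tr_lie.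
  have ex := wsp_a hx; have ey := wsp_a hy.
  have [ax xa _] := weight h2 (etrans ha (esym (scale1r 1))) ex mun0.
  have mun0' : - mu != 0 by rewrite oppr_eq0.
  have [ay ya _] := weight h2 (etrans ha (esym (scale1r 1))) ey mun0'.
  have e1 : x * y * a = (- (mu / 2)) *: (x * y) by rewrite -mulrA ya -scalerAr mulNr.
  have e2 : y * x * a = (mu / 2) *: (y * x) by rewrite -mulrA xa -scalerAr.
  have e3 : a * (x * y) = (- (mu / 2)) *: (x * y) by rewrite mulrA ax -scalerAl.
  have e4 : a * (y * x) = (mu / 2) *: (y * x) by rewrite mulrA ay -scalerAl mulNr opprK.
  by rewrite lieE mulrBl mulrBr e1 e2 e3 e4 scale0r subrr.
exists a; split; first exact: a_neq0.
move=> w; split.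
  move=> [k [c [v [hv ->]]]].
  exists (\sum_(i < k) c i * (\tr (v i * a) / 2)).
  rewrite scaler_suml; apply: eq_bigr => i _.
  by rewrite {1}(hA _ (hv i)) scalerA.
move=> [c ->].
exists 1%N, (fun _ => 1), (fun _ => c *: a); split; last by rewrite big_ord1 scale1r.
move=> _.
pose w0 := L 0 0 1 (- s); pose y0 := L 0 0 1 s.
exists ((- (c * s) / 4) *: w0), y0; split; last split.
- apply: wspZ; apply: wsp_intro => //.
    by rewrite (Ltr h2 hba ta tb) mul0r.
  rewrite lieLa -/mu emu (Lscale a b); apply: Leq; try ring.
  transitivity (- (s * s) * 2); first by rewrite hs; ring.
  by ring.
- apply: wsp_intro => //; first exact: lin_neg.
    by rewrite (Ltr h2 hba ta tb) mul0r.
  rewrite lieLa -/mu emu (Lscale a b); apply: Leq; try ring.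
  transitivity (- (s * s) * 2); first by rewrite hs; ring.
  by ring.
- rewrite lieZl (Llie ha hb hba) (Lscale a b) [in LHS](La1 a b) (Lscale a b).
  apply: Leq; try ring.
  transitivity (c * (s * s)); first by rewrite hs mulr1.
  by field; rewrite ?n4 ?h2.
Qed.

Hypothesis h3 : (3 : F) != 0.

Lemma condc (l : nat) : (4 < l)%N -> cond_c l H.
Proof.
move=> hl4 a1 b1 hra hrb hne hall.
have bn0 : b1 a != 0 by apply: (root_ne0 hrb.1 hne).
have rv k : (1 <= k <= l - 1)%N -> (a1 a + k%:R * b1 a) ^+ 3 = 4 * (a1 a + k%:R * b1 a).
  by move=> hk; exact: (root_val (hall k hk)).
have r1 := rv 1%N ltac:(apply/andP; split; lia).
have r2 := rv 2%N ltac:(apply/andP; split; lia).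
have r3 := rv 3%N ltac:(apply/andP; split; lia).
have r4 := rv 4%N ltac:(apply/andP; split; lia).
have : 6 * b1 a ^+ 3 = 0.
  have -> : 6 * b1 a ^+ 3 =
    ((a1 a + 4%:R * b1 a) ^+ 3 - 4 * (a1 a + 4%:R * b1 a))
    - 3 * ((a1 a + 3%:R * b1 a) ^+ 3 - 4 * (a1 a + 3%:R * b1 a))
    + 3 * ((a1 a + 2%:R * b1 a) ^+ 3 - 4 * (a1 a + 2%:R * b1 a))
    - ((a1 a + 1%:R * b1 a) ^+ 3 - 4 * (a1 a + 1%:R * b1 a)) by ring.
  by rewrite r1 r2 r3 r4 !subrr !mulr0 !subrr addr0 subrr.
move/eqP; rewrite mulf_eq0 expf_eq0 /= (negbTE bn0) orbF.
have -> : (6 : F) = 2 * 3 by ring.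
by rewrite mulf_eq0 (negbTE h2) (negbTE h3).
Qed.

Lemma CC (l : nat) : (4 < l)%N -> classical_cartan l H.
Proof.
move=> hl4.
split; last split; last split; last split.
- split; last split.
  + split.
      by move=> x /memH [c ->]; rewrite /in_sl mxtraceZ ta mulr0.
    by move=> x y /memH [c ->] /memH [c' ->]; rewrite lie_line mem0v.
  + exists 1%N => xs y.
    case: xs => [|x [|//]] //= _ hx hy.
    have /memH [c ->] := hx x (mem_head _ _).
    by have /memH [c' ->] := hy; rewrite lie_line.
  + move=> x tx hn.
    have /memH [c hc] := hn a aH.
    rewrite (in_line h2 (c := c) tx ta ha); first by rewrite memvZ // aH.
    by rewrite -lieE.
- by move=> x y /memH [c ->] /memH [c' ->]; rewrite lie_line.
- split; first exact: decomp.
  exact: indep.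
- exact: condb.
- exact: condc.
Qed.

End Line.

Section Comp.
Variable F : fieldType.
Hypothesis h2 : (2 : F) != 0.
Local Notation M := 'M[F]_2.

Lemma comp_data (l : nat) (H : {vspace M}) : classical_cartan l H ->
  exists u : M, [/\ \tr u = 0, u * u = 1, u \in H &
    forall h, h \in H -> h = (\tr (h * u) / 2) *: u].
Proof.
move=> [[hsub [_ hsn]] [hab [[hdec _] _]]].
pose x := vpick H.
have xH : x \in H := memv_pick H.
have xn0 : x != 0.
  rewrite vpick0; apply/eqP => H0.
  have : E01 F \in H.
    apply: hsn; first exact: trE01.
    by move=> h; rewrite H0 memv0 => /eqP ->; rewrite lieE mulr0 mul0r subrr mem0v.
  by rewrite H0 memv0 (negbTE (E01_neq0 F)).
have tx : \tr x = 0 := hsub.1 x xH.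
have [e [te he]] : exists e : M, \tr e = 0 /\ lie e x != 0.
  case: (eqVneq (lie (E01 F) x) 0) => h1; last by exists (E01 F); split => //; exact: trE01.
  case: (eqVneq (lie (E10 F) x) 0) => h3; last by exists (E10 F); split => //; exact: trE10.
  move: h1 h3; rewrite !lieE => /eqP; rewrite subr_eq0 => /eqP h1 /eqP; rewrite subr_eq0 => /eqP h3.
  have ex := central2 (esym h1) (esym h3).
  move: tx; rewrite ex mxtraceZ tr1 => /eqP; rewrite mulf_eq0 (negbTE h2) orbF => /eqP x0.
  by move: xn0; rewrite ex x0 scale0r eqxx.
have [k [al [xs [hw hs]]]] := hdec e te.
have [i hi] : exists i, lie (xs i) x != 0.
  apply/existsP; apply: contraNT he => /existsPn hn.
  rewrite hs lie_suml big1 // => i _.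
  by apply/eqP; move: (hn i); rewrite negbK.
have [_ hwi] := (hw i).2.
have hyx : xs i * x - x * xs i = al i x *: xs i by rewrite -lieE hwi.
have mun0 : al i x != 0.
  by apply: contraNneq hi => m0; rewrite hwi // m0 scale0r.
have yn0 : xs i != 0 by apply: contraNneq hi => ->; rewrite lie0l.
have hxx : x * x = (\tr (x * x) / 2) *: 1.
  have := polar tx tx.
  rewrite -mulr2n -scaler_nat => e2.
  by rewrite mulrC -scalerA -e2 scalerA mulVf // scale1r.
have [_ _ e3] := weight h2 hxx hyx mun0.
have hd : (al i x / 2) ^+ 2 = \tr (x * x) / 2.
  apply/eqP; rewrite -subr_eq0; apply/eqP.
  have : ((al i x / 2) ^+ 2 - \tr (x * x) / 2) *: xs i = 0 by rewrite scalerBl e3 subrr.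
  by move/eqP; rewrite scaler_eq0 (negbTE yn0) orbF => /eqP.
pose u := (al i x / 2)^-1 *: x.
have sn0 : al i x / 2 != 0 by rewrite mulf_neq0 // invr_eq0.
have tu : \tr u = 0 by rewrite mxtraceZ tx mulr0.
have hu : u * u = 1.
  rewrite /u -scalerAl -scalerAr hxx !scalerA -hd.
  by rewrite -expr2 -exprMn mulVf // expr1n scale1r.
exists u; split => //; first by rewrite memvZ.
move=> h hh; apply: (in_line h2 (c := 0)) => //; first exact: hsub.1.
by rewrite scale0r -lieE hab // memvZ.
Qed.

End Comp.

Lemma sum3 (V : zmodType) (f : 'I_3 -> V) : \sum_(i < 3) f i = f 0 + f 1 + f 2.
Proof.
rewrite !big_ord_recr big_ord0 /= add0r.
by congr (f _ + f _ + f _); apply: val_inj.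
Qed.

Section Cod.
Variable F : fieldType.
Hypothesis h2 : (2 : F) != 0.
Local Notation M := 'M[F]_2.

Lemma anti3 (a b c : M) : a * a = 1 -> b * b = 1 -> c * c = 1 ->
  b * a = - (a * b) -> c * a = - (a * c) -> c * b = - (b * c) ->
  [/\ a * b * c * a = a * (a * b * c), a * b * c * b = b * (a * b * c),
      a * b * c * c = c * (a * b * c) & a * b * c * (a * b * c) = - 1].
Proof.
move=> ha hb hc hba hca hcb.
have ra y : a * (a * y) = y by rewrite mulrA ha mul1r.
have rb y : b * (b * y) = y by rewrite mulrA hb mul1r.
have rc y : c * (c * y) = y by rewrite mulrA hc mul1r.
have rba y : b * (a * y) = - (a * (b * y)) by rewrite mulrA hba mulNr mulrA.
have rca y : c * (a * y) = - (a * (c * y)) by rewrite mulrA hca mulNr mulrA.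
have rcb y : c * (b * y) = - (b * (c * y)) by rewrite mulrA hcb mulNr mulrA.
split; rewrite -!mulrA;
  rewrite ?(ra, rb, rc, rba, rca, rcb, ha, hb, hc, hba, hca, hcb, mulrN, mulNr, opprK) //.
Qed.

Lemma cod_full (l : nat) (Hs : 'I_3 -> {vspace M}) : COD l Hs -> (4 : F) != 0 ->
  exists (a b : M) (z : F),
  [/\ a * a = 1, b * b = 1, b * a = - (a * b), \tr a = 0 & \tr b = 0] /\
  z * z = -1 /\
  (forall h, h \in Hs 0 <-> exists k, h = k *: a) /\
  (forall h, h \in Hs 1 <-> exists k, h = k *: b) /\
  (forall h, h \in Hs 2 <-> exists k, h = k *: (a * b)) /\
  (forall m, exists p q r s, m = L a b p q r s).
Proof.
move=> [hC [hK [hS _]]] h4.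
have [u hu] := fin_all_exists (fun i => comp_data h2 (hC i)).
have tu i : \tr (u i) = 0 by have [] := hu i.
have uu i : u i * u i = 1 by have [] := hu i.
have uH i : u i \in Hs i by have [] := hu i.
have uc i h : h \in Hs i -> h = (\tr (h * u i) / 2) *: u i by have [_ _ _] := hu i; apply.
have memHs i h : h \in Hs i <-> exists k, h = k *: u i.
  split; first by move=> hh; exists (\tr (h * u i) / 2); apply: uc.
  by move=> [k ->]; rewrite memvZ.
have anti i j : i != j -> u j * u i = - (u i * u j).
  move=> ne; have := hK i j ne _ _ (uH i) (uH j).
  rewrite /killing mulmxE => /eqP; rewrite mulf_eq0.
  have -> : ((2 * 2)%:R : F) = 4 by rewrite natrM.
  rewrite (negbTE h4) /= => /eqP t0.
  have := polar (tu i) (tu j); rewrite t0 scale0r => /eqP.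
  by rewrite addrC addr_eq0 => /eqP.
pose a := u 0; pose b := u 1; pose c := u 2.
have [wa wb wc ww] := anti3 (uu 0) (uu 1) (uu 2) (anti 0 1 isT) (anti 0 2 isT) (anti 1 2 isT).
pose w := a * b * c.
have wcomm m : \tr m = 0 -> w * m = m * w.
  move=> tm; have /memv_sumP [vs hvs ->] : m \in (\sum_(i < 3) Hs i)%VS by apply/hS.
  rewrite mulr_sumr mulr_suml; apply: eq_bigr => i _.
  have [k ->] := (memHs i (vs i)).1 (hvs i isT).
  rewrite -scalerAr -scalerAl; congr (_ *: _).
  have : i = 0 \/ i = 1 \/ i = 2.
    by case: i => [[|[|[|//]]]] hi; [left|right;left|right;right]; apply: val_inj.
  by case=> [->|[->|->]]; rewrite /w /a /b /c ?wa ?wb ?wc.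
pose z := w 0 0.
have wz : w = z *: 1 by apply: central2; apply: wcomm; [exact: trE01|exact: trE10].
have zz : z * z = -1.
  have := congr1 (fun A : M => A 0 0) ww.
  by rewrite -/w wz -scalerAl -scalerAr mul1r scalerA !mxE /= mulr1.
have zn0 : z != 0 by apply: contra_eq_neq zz => ->; rewrite mul0r eq_sym oppr_eq0 oner_neq0.
have ec : c = (- z) *: (a * b).
  have : c = (b * a) * w.
    by rewrite /w !mulrA -(mulrA b a a) (uu 0) mulr1 (uu 1) mul1r.
  by rewrite wz -scalerAr mulr1 (anti 0 1 isT) scalerN scaleNr.
exists a, b, z; split; first by split; rewrite ?tu ?uu // anti.
split => //; split; first exact: memHs.
split; first exact: memHs.
split.
  move=> h; rewrite memHs -/c ec; split.
    by move=> [k ->]; exists (k * - z); rewrite scalerA.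
  by move=> [k ->]; exists (k / - z); rewrite scalerA mulfVK // oppr_eq0.
move=> m.
pose m' := m - (\tr m / 2) *: 1.
have tm' : \tr m' = 0 by rewrite /m' linearB /= mxtraceZ tr1 mulfVK // subrr.
have /memv_sumP [vs hvs em'] : m' \in (\sum_(i < 3) Hs i)%VS by apply/hS.
have [k0 e0] := (memHs 0 (vs 0)).1 (hvs 0 isT).
have [k1 e1] := (memHs 1 (vs 1)).1 (hvs 1 isT).
have [k2 e2] := (memHs 2 (vs 2)).1 (hvs 2 isT).
exists (\tr m / 2), k0, k1, (- (k2 * z)).
rewrite {1}(_ : m = (\tr m / 2) *: 1 + m'); last by rewrite /m' addrC subrK.
rewrite em' sum3 e0 e1 e2 -/a -/b -/c ec scalerA /L.
by rewrite !addrA mulrN.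
Qed.
End Cod.

Section Iso.
Variable F : fieldType.
Hypothesis h2 : (2 : F) != 0.
Local Notation M := 'M[F]_2.
Variables a b a' b' : M.
Hypotheses (ha : a * a = 1) (hb : b * b = 1) (hba : b * a = - (a * b))
  (ta : \tr a = 0) (tb : \tr b = 0).
Hypotheses (ha' : a' * a' = 1) (hb' : b' * b' = 1) (hba' : b' * a' = - (a' * b'))
  (ta' : \tr a' = 0) (tb' : \tr b' = 0).
Hypothesis hspan : forall m, exists p q r s, m = L a b p q r s.
Hypothesis hspan' : forall m, exists p q r s, m = L a' b' p q r s.

Definition phi (m : M) : M := L a' b' (cp m) (cq a m) (cr b m) (cs a b m).
Definition psi (m : M) : M := L a b (cp m) (cq a' m) (cr b' m) (cs a' b' m).

Lemma phiL p q r s : phi (L a b p q r s) = L a' b' p q r s.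
Proof.
by rewrite /phi (cpL h2 hba ta tb) (cqL h2 ha hb hba ta tb) (crL h2 ha hb hba ta tb) (csL h2 ha hb hba ta tb).
Qed.
Lemma psiL p q r s : psi (L a' b' p q r s) = L a b p q r s.
Proof.
by rewrite /psi (cpL h2 hba' ta' tb') (cqL h2 ha' hb' hba' ta' tb') (crL h2 ha' hb' hba' ta' tb') (csL h2 ha' hb' hba' ta' tb').
Qed.

Lemma phi_aut : lie_aut phi.
Proof.
split; last split; last split; last split.
- move=> c x y _ _.
  have [p [q [r [s ->]]]] := hspan x; have [p' [q' [r' [s' ->]]]] := hspan y.
  by rewrite (Lscale a b) (Ladd a b) !phiL (Lscale a' b') (Ladd a' b').
- move=> x; have [p [q [r [s ->]]]] := hspan x.
  by rewrite /in_sl phiL !(Ltr h2 hba ta tb) (Ltr h2 hba' ta' tb').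
- move=> x y _ _.
  have [p [q [r [s ->]]]] := hspan x; have [p' [q' [r' [s' ->]]]] := hspan y.
  rewrite !phiL => e.
  by rewrite -(psiL p) -(psiL p') e.
- move=> y ty; exists (psi y).
  have [p [q [r [s ey]]]] := hspan' y.
  rewrite ey psiL phiL; split => //.
  by move: ty; rewrite /in_sl ey !(Ltr h2 hba ta tb) (Ltr h2 hba' ta' tb').
- move=> x y _ _.
  have [p [q [r [s ->]]]] := hspan x; have [p' [q' [r' [s' ->]]]] := hspan y.
  by rewrite !(Llie ha hb hba) !phiL (Llie ha' hb' hba').
Qed.

Lemma phiZa k : phi (k *: a) = k *: a'.
Proof. by rewrite (La1 a b) (Lscale a b) phiL -(Lscale a' b') -La1. Qed.
Lemma phiZb k : phi (k *: b) = k *: b'.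
Proof. by rewrite (Lb1 a b) (Lscale a b) phiL -(Lscale a' b') -Lb1. Qed.
Lemma phiZab k : phi (k *: (a * b)) = k *: (a' * b').
Proof. by rewrite (Lab1 a b) (Lscale a b) phiL -(Lscale a' b') -Lab1. Qed.

End Iso.

Section Conj.
Variable F : fieldType.
Hypothesis h2 : (2 : F) != 0.
Hypothesis h4 : (4 : F) != 0.
Local Notation M := 'M[F]_2.

Lemma comp_iff (P Q : M -> Prop) (u u' : M) (f : M -> M) :
  (forall h, P h <-> exists k, h = k *: u) -> (forall h, Q h <-> exists k, h = k *: u') ->
  (forall k, f (k *: u) = k *: u') -> forall y, Q y <-> exists x, P x /\ f x = y.
Proof.
move=> hP hQ hf y; rewrite hQ; split.
  by move=> [k ->]; exists (k *: u); split; [apply/hP; exists k|].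
by move=> [x [/hP [k ->] <-]]; exists k.
Qed.

Lemma cod_conj (l : nat) (Hs Ks : 'I_3 -> {vspace M}) :
  COD l Hs -> COD l Ks -> COD_conjugate Hs Ks.
Proof.
move=> cH cK.
have [a [b [z [[ha hb hba ta tb] [_ [H0 [H1 [H2 hs]]]]]]]] := cod_full h2 cH h4.
have [a' [b' [z' [[ha' hb' hba' ta' tb'] [_ [K0 [K1 [K2 hs']]]]]]]] := cod_full h2 cK h4.
exists (phi a b a' b'); split; first exact: phi_aut.
exists id => i y /=.
have : i = 0 \/ i = 1 \/ i = 2.
  by case: i => [[|[|[|//]]]] hi; [left|right;left|right;right]; apply: val_inj.
case=> [->|[->|->]].
- exact: (comp_iff (P := fun x => x \in Hs 0) (Q := fun y => y \in Ks 0) H0 K0 (phiZa h2 a' b' ha hb hba ta tb)).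
- exact: (comp_iff (P := fun x => x \in Hs 1) (Q := fun y => y \in Ks 1) H1 K1 (phiZb h2 a' b' ha hb hba ta tb)).
- exact: (comp_iff (P := fun x => x \in Hs 2) (Q := fun y => y \in Ks 2) H2 K2 (phiZab h2 a' b' ha hb hba ta tb)).
Qed.
End Conj.

Section Exist.
Variable F : fieldType.
Hypotheses (h2 : (2 : F) != 0) (h3 : (3 : F) != 0).
Local Notation M := 'M[F]_2.

Definition mk2 (x y u w : F) : M :=
  \matrix_(i < 2, j < 2) (if i == 0 then (if j == 0 then x else y) else (if j == 0 then u else w)).

Definition sa : M := mk2 1 0 0 (-1).
Definition sb : M := mk2 0 1 1 0.

Lemma sa2 : sa * sa = 1.
Proof. by apply: mx2_eq; rewrite !mxE !sum2 !mxE /=; ring. Qed.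
Lemma sb2 : sb * sb = 1.
Proof. by apply: mx2_eq; rewrite !mxE !sum2 !mxE /=; ring. Qed.
Lemma sba : sb * sa = - (sa * sb).
Proof. by apply: mx2_eq; rewrite !mxE !sum2 !mxE /=; ring. Qed.
Lemma tsa : \tr sa = 0.
Proof. by rewrite tr2 !mxE /=; ring. Qed.
Lemma tsb : \tr sb = 0.
Proof. by rewrite tr2 !mxE /=; ring. Qed.

Lemma sspan (m : M) : exists p q r s, m = L sa sb p q r s.
Proof.
exists ((m 0 0 + m 1 1) / 2), ((m 0 0 - m 1 1) / 2), ((m 0 1 + m 1 0) / 2), ((m 0 1 - m 1 0) / 2).
by apply: mx2_eq; rewrite /L !mxE !sum2 !mxE /=; field.
Qed.


Section Pairs.
Variables a b : M.
Hypotheses (ha : a * a = 1) (hb : b * b = 1) (hba : b * a = - (a * b))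
  (ta : \tr a = 0) (tb : \tr b = 0).
Hypothesis hspan : forall m, exists p q r s, m = L a b p q r s.

Lemma hab' : a * b = - (b * a).
Proof. by rewrite hba opprK. Qed.

Lemma span_swap m : exists p q r s, m = L b a p q r s.
Proof.
have [p [q [r [s ->]]]] := hspan m.
exists p, r, q, (- s); rewrite /L hba scaleNr scalerN opprK.
by congr (_ + _); rewrite addrAC.
Qed.

Variable z : F.
Hypothesis hz : z * z = -1.
Let c := z *: (a * b).

Lemma zn0 : z != 0.
Proof. by apply: contra_eq_neq hz => ->; rewrite mul0r eq_sym oppr_eq0 oner_neq0. Qed.

Lemma c2 : c * c = 1.
Proof. by rewrite /c -scalerAl -scalerAr scalerA hz (abab ha hb hba) scaleN1r opprK. Qed.
Lemma ac : a * c = - (c * a).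
Proof.
rewrite /c -scalerAl -scalerAr -scalerN; congr (_ *: _).
by rewrite (aba ha hba) opprK mulrA ha mul1r.
Qed.
Lemma tc : \tr c = 0.
Proof. by rewrite /c mxtraceZ (trab h2 hba) mulr0. Qed.

Lemma span_c m : exists p q r s, m = L c a p q r s.
Proof.
have [p [q [r [s ->]]]] := hspan m.
exists p, (- (z * s)), q, (z * r).
rewrite /L /c -scalerAl (aba ha hba) scalerN !scalerA.
have e1 : (- (z * s) * z) = s.
  by rewrite mulNr -mulrA (mulrC s) mulrA hz mulN1r opprK.
have e2 : (z * r) *: - (z *: b) = r *: b.
  rewrite scalerN scalerA -mulrA (mulrC r) mulrA hz -scaleNr.
  by rewrite mulN1r opprK.
rewrite e1 e2.
by rewrite -!addrA; congr (_ + _); rewrite [RHS]addrC -addrA.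
Qed.
End Pairs.

Variable z : F.
Hypothesis hz : z * z = -1.
Definition U (i : 'I_3) : M := nth 0 [:: sa; sb; z *: (sa * sb)] i.
Definition HsE (i : 'I_3) : {vspace M} := <[U i]>%VS.

Lemma ord3P (i : 'I_3) : i = 0 \/ i = 1 \/ i = 2.
Proof. by case: i => [[|[|[|//]]]] hi; [left|right;left|right;right]; apply: val_inj. Qed.

Lemma U0L : U 0 = L sa sb 0 1 0 0.
Proof. exact: La1. Qed.
Lemma U1L : U 1 = L sa sb 0 0 1 0.
Proof. exact: Lb1. Qed.
Lemma U2L : U 2 = L sa sb 0 0 0 z.
Proof. by rewrite /U /= (Lab1 sa sb) (Lscale sa sb); apply: Leq; ring. Qed.

Lemma trUU (i j : 'I_3) : i != j -> \tr (U i * U j) = 0.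
Proof.
case: (ord3P i) => [->|[->|->]]; case: (ord3P j) => [->|[->|->]] // _;
  rewrite ?U0L ?U1L ?U2L (Lmul sa2 sb2 sba) (Ltr h2 sba tsa tsb); ring.
Qed.

Lemma memU (i : 'I_3) x : x \in HsE i -> exists k, x = k *: U i.
Proof. by move/vlineP. Qed.

Lemma trU (i : 'I_3) : \tr (U i) = 0.
Proof.
case: (ord3P i) => [->|[->|->]]; rewrite /U /= ?tsa ?tsb //.
by rewrite mxtraceZ (trab h2 sba) mulr0.
Qed.

Lemma cod_exist (l : nat) : (4 < l)%N -> COD l HsE.
Proof.
move=> hl.
split; last split; last split.
- move=> i; case: (ord3P i) => [->|[->|->]]; rewrite /HsE /U /=.
  + exact: (CC h2 sa2 sb2 sba tsa tsb sspan h3 hl).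
  + exact: (CC h2 sb2 sa2 (hab' sba) tsb tsa (span_swap sba sspan) h3 hl).
  + apply: (CC h2 _ sa2 _ _ tsa _ h3 hl).
    * exact: (c2 sa2 sb2 sba hz).
    * exact: (ac sa2 sba z).
    * exact: (tc sba z).
    * exact: (span_c sa2 sba sspan hz).
- move=> i j ne x y /memU [k ->] /memU [k' ->].
  by rewrite /killing mulmxE -scalerAl -scalerAr !mxtraceZ trUU // !mulr0.
- move=> x; split.
  + move=> tx; apply/memv_sumP.
    have [p [q [r [s ex]]]] := sspan x.
    have p0 : p = 0.
      move: tx; rewrite /in_sl ex (Ltr h2 sba tsa tsb) => /eqP.
      by rewrite mulf_eq0 (negbTE h2) orbF => /eqP.
    exists (fun i : 'I_3 => nth 0 [:: q *: U 0; r *: U 1; (s / z) *: U 2] i).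
      by move=> i _; case: (ord3P i) => [->|[->|->]]; rewrite /= memvZ // memv_line.
    rewrite sum3 /= ex p0 /U /= scalerA mulfVK ?(zn0 hz) //.
    by rewrite /L scale0r add0r.
  + move/memv_sumP => [vs hvs ->].
    rewrite /in_sl linear_sum /=; apply: big1 => i _.
    by have [k ->] := memU (hvs i isT); rewrite mxtraceZ trU mulr0.
- apply/directv_sum_independent => us hus hs i _.
  have [k0 e0] := memU (hus 0 isT).
  have [k1 e1] := memU (hus 1 isT).
  have [k2 e2] := memU (hus 2 isT).
  move: hs; rewrite sum3 e0 e1 e2 /U /= scalerA.
  move=> e.
  have eL : L sa sb 0 k0 k1 (k2 * z) = 0 by rewrite /L scale0r add0r.
  have c0 : forall f : M -> F, (forall m, f m = \tr (m * sa) / 2 \/ f m = \tr (m * sb) / 2 \/ f m = - \tr (m * (sa * sb)) / 2) -> f 0 = 0.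
    by move=> f hf; case: (hf 0) => [->|[->|->]]; rewrite mul0r linear0 ?oppr0 mul0r.
  have k00 : k0 = 0.
    by rewrite -(cqL h2 sa2 sb2 sba tsa tsb 0 k0 k1 (k2 * z)) eL /cq mul0r linear0 mul0r.
  have k10 : k1 = 0.
    by rewrite -(crL h2 sa2 sb2 sba tsa tsb 0 k0 k1 (k2 * z)) eL /cr mul0r linear0 mul0r.
  have k20 : k2 * z = 0.
    by rewrite -(csL h2 sa2 sb2 sba tsa tsb 0 k0 k1 (k2 * z)) eL /cs mul0r linear0 oppr0 mul0r.
  have k20' : k2 = 0.
    by move/eqP: k20; rewrite mulf_eq0 (negbTE (zn0 hz)) orbF => /eqP.
  by case: (ord3P i) => [->|[->|->]]; rewrite ?e0 ?e1 ?e2 ?k00 ?k10 ?k20' scale0r.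
Qed.


End Exist.

Lemma prim4 (F : fieldType) (z : F) : (2 : F) != 0 -> z * z = -1 -> 4.-primitive_root z.
Proof.
move=> h2 hz.
have n1 : (1 : F) != -1.
  apply: contra h2 => /eqP e; rewrite -[2]/(1 + 1 : F) {1}e addNr //.
apply/andP; split => //; apply/forallP => i; rewrite unity_rootE; apply/eqP.
case: i => [[|[|[|[|//]]]]] hi /=.
- rewrite expr1 -[RHS]/false; apply/negbTE/eqP => e; move: hz; rewrite e mulr1 => /eqP.
  by rewrite (negbTE n1).
- by rewrite -[RHS]/false expr2 hz eq_sym (negbTE n1).
- rewrite -[RHS]/false exprS expr2 hz mulrN1; apply/negbTE/eqP => e.
  have e' : z = -1 by rewrite -e opprK.
  by move: hz; rewrite e' mulrNN mulr1 => /eqP; rewrite (negbTE n1).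
- by rewrite -[RHS]/true (_ : 4 = 2 + 2)%N // exprD expr2 hz mulrNN mulr1 eqxx.
Qed.

Lemma prim4_sq (F : fieldType) (z : F) : 4.-primitive_root z -> z * z = -1.
Proof.
move=> pz.
have z4 : z ^+ 4 = 1 := prim_expr_order pz.
have z2 : z ^+ 2 != 1.
  by rewrite -(expr0 z) (eq_prim_root_expr pz).
have : (z ^+ 2 - 1) * (z ^+ 2 + 1) = 0.
  have -> : (z ^+ 2 - 1) * (z ^+ 2 + 1) = z ^+ 4 - 1 by ring.
  by rewrite z4 subrr.
move/eqP; rewrite mulf_eq0 subr_eq0 (negbTE z2) /= addr_eq0 => /eqP.
by rewrite expr2.
Qed.

Theorem theorem3p2 (F : fieldType) (p : nat)
  (hchar : p \in [pchar F]) (hp3 : (3 < p)%N) :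
  ((exists Hs : 'I_3 -> {vspace 'M[F]_2}, COD p Hs) /\
   (forall Hs Ks : 'I_3 -> {vspace 'M[F]_2},
      COD p Hs -> COD p Ks -> COD_conjugate Hs Ks))
  <-> (exists z : F, 4.-primitive_root z).
Proof.
have hpr : prime p := pcharf_prime hchar.
have hn (n : nat) : (0 < n)%N -> (n < p)%N -> (n%:R : F) != 0.
  by move=> h0 hlt; rewrite -(dvdn_pcharf hchar) gtnNdvd.
have h2 : (2 : F) != 0 by apply: hn => //; lia.
have h3 : (3 : F) != 0 by apply: hn => //; lia.
have h4 : (4 : F) != 0.
  have -> : (4 : F) = 2 * 2 by ring.
  by rewrite mulf_neq0.
have hp5 : (4 < p)%N.
  rewrite ltn_neqAle hp3 andbT; apply/eqP => e4.
  by move: hpr; rewrite -e4.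
split.
  move=> [[Hs cH] _].
  have [a [b [z [_ [hz _]]]]] := cod_full h2 cH h4.
  by exists z; apply: prim4.
move=> [z pz].
have hz := prim4_sq pz.
split.
  by exists (HsE z); apply: cod_exist.
by move=> Hs Ks cH cK; apply: (cod_conj h2 h4 cH cK).
Qed.
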